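(* Let \(X\) be a nonempty set and let \(\Phi\) be a mapping with domain \(X^{2}\) such that \(|\Phi(X^{2})| \leqslant \aleph_{0}\). Then the following conditions are equivalent. (i) \(\Phi\) is combinatorially similar to a pseudoultrametric \(d \colon X^{2} \to [0,\infty)\) with \(d(X^{2}) \subseteq \mathbb{Q}^{+}\), where \(\mathbb{Q}^{+} = \mathbb{Q} \cap [0,\infty)\). (ii) \(\Phi\) is combinatorially similar to a pseudoultrametric. (iii) \(\Phi\) is symmetric, the transitive closure \(u_{\Phi}^{t}\) of the binary relation \(u_{\Phi}\) is antisymmetric, \(\Phi\) is \(a_0\)-coherent for some point \(a_0 \in \Phi(X^{2})\), and for every triple \(\langle x_1, x_2, x_3\rangle\) of points of \(X\) there is a permutation \((i_1,i_2,i_3)\) of \((1,2,3)\) such that \(\Phi(x_{i_1}, x_{i_2}) = \Phi(x_{i_2}, x_{i_3})\).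
   Context: For a mapping \(F\) with domain \(A\), \(F(A)\) denotes its range. A pseudoultrametric on a set \(Z\) is a symmetric function \(d\colon Z^2\to[0,\infty)\) with \(d(z,z)=0\) and \(d(x,y)\le \max\{d(x,z),d(z,y)\}\) for all \(x,y,z\in Z\). For nonempty sets \(X,Y\) and mappings \(\Phi\) with domain \(X^2\), \(\Psi\) with domain \(Y^2\), \(\Phi\) is combinatorially similar to \(\Psi\) if there are bijections \(f\colon \Phi(X^2)\to\Psi(Y^2)\) and \(g\colon Y\to X\) with \(\Psi(x,y)=f(\Phi(g(x),g(y)))\) for all \(x,y\in Y\). A mapping \(\Phi\) with domain \(X^2\) is strongly consistent with an equivalence relation \(R\) on \(X\) if \(\langle x_1,x_2\rangle\in R\) and \(\langle x_3,x_4\rangle\in R\) imply \(\Phi(x_1,x_3)=\Phi(x_2,x_4)\); for \(a_0\in\Phi(X^2)\), \(\Phi\) is \(a_0\)-coherent if the fiber \(\Phi^{-1}(a_0)=\{\langle x,y\rangle: \Phi(x,y)=a_0\}\) is an equivalence relation on \(X\) and \(\Phi\) is strongly consistent with it. For \(\Phi\) with domain \(X^2\) and \(Y=\Phi(X^2)\), \(u_\Phi\subseteq Y^2\) is the relation: \(\langle y_1,y_2\rangle\in u_\Phi\) iff there are \(x_1,x_2,x_3\in X\) with \(y_1=\Phi(x_1,x_3)\) and \(y_2=\Phi(x_1,x_2)=\Phi(x_2,x_3)\). The transitive closure of a relation \(\gamma\) is \(\gamma^t=\bigcup_{n\ge1}\gamma^n\), where \(\gamma^1=\gamma\), \(\gamma^{n+1}=\gamma^n\circ\gamma\)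 and \(\langle x,y\rangle\in\alpha\circ\beta\) iff there is \(z\) with \(\langle x,z\rangle\in\alpha\), \(\langle z,y\rangle\in\beta\). *)

(* Defs.v *)
From Stdlib Require Import Reals QArith Qreals Relations.
Open Scope R_scope.

Definition rng {X Y : Type} (Phi : X -> X -> Y) : Type :=
  {y : Y | exists x1 x2, Phi x1 x2 = y}.

Definition in_rng {X Y : Type} (Phi : X -> X -> Y) (a b : X) : rng Phi :=
  exist _ (Phi a b) (ex_intro _ a (ex_intro _ b eq_refl)).

Definition injective {A B : Type} (f : A -> B) : Prop :=
  forall a a', f a = f a' -> a = a'.
Definition surjective {A B : Type} (f : A -> B) : Prop :=
  forall b, exists a, f a = b.
Definition bijective {A B : Type} (f : A -> B) : Prop :=
  injective f /\ surjective f.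

Definition countable_range {X Y : Type} (Phi : X -> X -> Y) : Prop :=
  exists h : rng Phi -> nat, injective h.

Definition comb_similar {X Y Z W : Type} (Phi : X -> X -> Y) (Psi : Z -> Z -> W)
  : Prop :=
  exists (f : rng Phi -> rng Psi) (g : Z -> X),
    bijective f /\ bijective g /\
    forall x y : Z, Psi x y = proj1_sig (f (in_rng Phi (g x) (g y))).

Definition pseudoultrametric {Z : Type} (d : Z -> Z -> R) : Prop :=
  (forall x y, 0 <= d x y) /\
  (forall x y, d x y = d y x) /\
  (forall z, d z z = 0) /\
  (forall x y z, d x y <= Rmax (d x z) (d z y)).

Definition symmetric_map {X Y : Type} (Phi : X -> X -> Y) : Prop :=
  forall x y, Phi x y = Phi y x.

Definition u_rel {X Y : Type} (Phi : X -> X -> Y) : relation Y :=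
  fun y1 y2 => exists x1 x2 x3,
    y1 = Phi x1 x3 /\ y2 = Phi x1 x2 /\ y2 = Phi x2 x3.

Definition antisymmetric_rel {Y : Type} (r : relation Y) : Prop :=
  forall a b, r a b -> r b a -> a = b.

Definition strongly_consistent {X Y : Type} (Phi : X -> X -> Y) (Rl : relation X)
  : Prop :=
  forall x1 x2 x3 x4, Rl x1 x2 -> Rl x3 x4 -> Phi x1 x3 = Phi x2 x4.

Definition coherent {X Y : Type} (Phi : X -> X -> Y) (a0 : Y) : Prop :=
  equivalence X (fun x y => Phi x y = a0) /\
  strongly_consistent Phi (fun x y => Phi x y = a0).

(* for every triple there is a permutation (i1,i2,i3) of (1,2,3) with
   Phi(x_i1,x_i2) = Phi(x_i2,x_i3); the six permutations written out *)
Definition triple_condition {X Y : Type} (Phi : X -> X -> Y) : Prop :=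
  forall x1 x2 x3 : X,
    Phi x1 x2 = Phi x2 x3 \/ Phi x1 x3 = Phi x3 x2 \/
    Phi x2 x1 = Phi x1 x3 \/ Phi x2 x3 = Phi x3 x1 \/
    Phi x3 x1 = Phi x1 x2 \/ Phi x3 x2 = Phi x2 x1.

(* Main.v *)
Require Import Defs.
From Stdlib Require Import Reals QArith Qreals Relations.
From Stdlib Require Import Qabs QOrderedType Qminmax Lra Lqa Classical ClassicalEpsilon List Lia.
Open Scope R_scope.

Local Close Scope R_scope.

Lemma list_bound {T} (l : list T) (h : T -> Q) :
  exists M, 0 < M /\ forall a, In a l -> -M < h a /\ h a < M.
Proof.
  induction l as [|x l [M [HM IH]]].
  - exists 1. split; [lra|]. intros a [].
  - exists (M + Qabs (h x) + 1). split.
    + pose proof (Qabs_nonneg (h x)). lra.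
    + intros a [<-|Ha].
      * pose proof (Qle_Qabs (h x)). pose proof (Qabs_opp (h x)).
        pose proof (Qle_Qabs (- h x)). split; lra.
      * destruct (IH a Ha). pose proof (Qabs_nonneg (h x)). split; lra.
Qed.

Lemma interval {T} (l : list T) (Lo Up : T -> Prop) (h : T -> Q) :
  forall L U, L < U ->
  (forall a, In a l -> Lo a -> h a < U) ->
  (forall a, In a l -> Up a -> L < h a) ->
  (forall a b, In a l -> In b l -> Lo a -> Up b -> h a < h b) ->
  exists L' U', L' < U' /\ L <= L' /\ U' <= U /\
                (forall a, In a l -> Lo a -> h a <= L') /\
                (forall a, In a l -> Up a -> U' <= h a).
Proof.
  induction l as [|x l IH]; intros L U HLU H1 H2 H3.
  - exists L, U. split; [auto|]. split; [lra|]. split; [lra|]. split; intros a [].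
  - destruct (classic (Lo x)) as [Hx|Hx].
    + destruct (classic (Up x)) as [Hy|Hy].
      { exfalso. pose proof (H3 x x (or_introl eq_refl) (or_introl eq_refl) Hx Hy). lra. }
      destruct (IH (Qmax L (h x)) U) as [L' [U' [A [B [C [D E]]]]]].
      * apply Q.max_lub_lt; auto. apply H1; simpl; auto.
      * intros a Ha; apply H1; simpl; auto.
      * intros a Ha Hu. apply Q.max_lub_lt. apply H2; simpl; auto.
        apply H3; simpl; auto.
      * intros a b Ha Hb; apply H3; simpl; auto.
      * pose proof (Q.le_max_l L (h x)). pose proof (Q.le_max_r L (h x)).
        exists L', U'. split; auto. split; [lra|]. split; [auto|]. split.
        -- intros a [<-|Ha] Hl; [lra|auto].
        -- intros a [<-|Ha] Hu; [contradiction|auto].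
    + destruct (classic (Up x)) as [Hy|Hy].
      * destruct (IH L (Qmin U (h x))) as [L' [U' [A [B [C [D E]]]]]].
        -- apply Q.min_glb_lt; auto. apply H2; simpl; auto.
        -- intros a Ha Hu. apply Q.min_glb_lt. apply H1; simpl; auto.
           apply H3; simpl; auto.
        -- intros a Ha; apply H2; simpl; auto.
        -- intros a b Ha Hb; apply H3; simpl; auto.
        -- pose proof (Q.le_min_l U (h x)). pose proof (Q.le_min_r U (h x)).
           exists L', U'. split; auto. split; [lra|]. split; [lra|]. split.
           ++ intros a [<-|Ha] Hl; [contradiction|auto].
           ++ intros a [<-|Ha] Hu; [lra|auto].
      * destruct (IH L U) as [L' [U' [A [B [C [D E]]]]]]; auto.
        -- intros a Ha; apply H1; simpl; auto.
        -- intros a Ha; apply H2; simpl; auto.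
        -- intros a b Ha Hb; apply H3; simpl; auto.
        -- exists L', U'. split; auto. split; [lra|]. split; [lra|]. split.
           ++ intros a [<-|Ha] Hl; [contradiction|auto].
           ++ intros a [<-|Ha] Hu; [contradiction|auto].
Qed.

Lemma avoid (F : list Q) : forall L U, L < U ->
  exists q, L < q /\ q < U /\ forall f, In f F -> ~ q == f.
Proof.
  induction F as [|f F IH]; intros L U HLU.
  - exists ((L+U)*(1#2)). split; [lra|]. split; [lra|]. intros f [].
  - destruct (Qlt_le_dec L f) as [H1|H1].
    + destruct (Qlt_le_dec f U) as [H2|H2].
      * destruct (IH L f H1) as [q [A [B C]]]. exists q. split; [auto|]. split; [lra|].
        intros g [<-|Hg]; [intro; lra|auto].
      * destruct (IH L U HLU) as [q [A [B C]]]. exists q. split; [auto|]. split; [auto|].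
        intros g [<-|Hg]; [intro; lra|auto].
    + destruct (IH L U HLU) as [q [A [B C]]]. exists q. split; [auto|]. split; [auto|].
      intros g [<-|Hg]; [intro; lra|auto].
Qed.

Lemma finite_D {T} (enc : T -> nat) (Henc : forall a b, enc a = enc b -> a = b) :
  forall n, exists l : list T, forall a, (enc a < n)%nat <-> In a l.
Proof.
  induction n as [|n [l IH]].
  - exists nil. intros a; split; [lia|intros []].
  - destruct (classic (exists t, enc t = n)) as [[t Ht]|Hn].
    + exists (t :: l). intros a. split.
      * intros Ha. destruct (Nat.eq_dec (enc a) n) as [E|E].
        -- left. apply Henc. congruence.
        -- right. apply IH. lia.
      * intros [<-|Ha]; [lia|]. apply IH in Ha. lia.
    + exists l. intros a. split.
      * intros Ha. apply IH. destruct (Nat.eq_dec (enc a) n) as [E|E].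
        -- exfalso; eauto.
        -- lia.
      * intros Ha. apply IH in Ha. lia.
Qed.

Definition Valid {T} (enc : T -> nat) (le : T -> T -> Prop) (n : nat) (h : T -> Q) :=
  (forall a b, (enc a < n)%nat -> (enc b < n)%nat -> le a b -> h a <= h b) /\
  (forall a b, (enc a < n)%nat -> (enc b < n)%nat -> h a == h b -> a = b).

Lemma step {T} (enc : T -> nat) (Henc : forall a b, enc a = enc b -> a = b)
  (le : T -> T -> Prop) (le_trans : forall a b c, le a b -> le b c -> le a c)
  (le_anti : forall a b, le a b -> le b a -> a = b) (le_refl : forall a, le a a) :
  forall n h, Valid enc le n h -> exists h', Valid enc le (S n) h' /\
     forall a, (enc a < n)%nat -> h' a = h a.
Proof.
  intros n h [V1 V2].
  destruct (classic (exists t, enc t = n)) as [[t Ht]|Hn].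
  2:{ exists h. split; [|auto]. assert (K : forall a, (enc a < S n)%nat -> (enc a < n)%nat).
      { intros a Ha. destruct (Nat.eq_dec (enc a) n); [exfalso; eauto|lia]. }
      split; intros a b Ha Hb; [apply V1|apply V2]; auto. }
  destruct (finite_D enc Henc n) as [l Hl].
  destruct (list_bound l h) as [M [HM HMl]].
  destruct (interval l (fun a => le a t) (fun a => le t a) h (-M) M) as [L' [U' [A [B [C [D E]]]]]].
  - lra.
  - intros a Ha _. apply HMl; auto.
  - intros a Ha _. apply HMl; auto.
  - intros a b Ha Hb H1 H2. apply Hl in Ha. apply Hl in Hb.
    assert (Hab : h a <= h b) by (apply V1; eauto).
    apply Qle_lteq in Hab. destruct Hab as [Hab|Hab]; auto.
    apply V2 in Hab; auto. subst b. assert (a = t) by auto. subst. lia.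
  - destruct (avoid (map h l) L' U' A) as [q [Q1 [Q2 Q3]]].
    exists (fun x => if Nat.eq_dec (enc x) n then q else h x). split.
    + split.
      * intros a b Ha Hb Hab.
        destruct (Nat.eq_dec (enc a) n) as [Ea|Ea]; destruct (Nat.eq_dec (enc b) n) as [Eb|Eb].
        -- lra.
        -- assert (a = t) by (apply Henc; congruence). subst a.
           assert (U' <= h b) by (apply E; auto; apply Hl; lia). lra.
        -- assert (b = t) by (apply Henc; congruence). subst b.
           assert (h a <= L') by (apply D; auto; apply Hl; lia). lra.
        -- apply V1; auto; lia.
      * intros a b Ha Hb Hab.
        destruct (Nat.eq_dec (enc a) n) as [Ea|Ea]; destruct (Nat.eq_dec (enc b) n) as [Eb|Eb].
        -- apply Henc; congruence.
        -- exfalso. apply (Q3 (h b)); auto. apply in_map. apply Hl; lia.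
        -- exfalso. apply (Q3 (h a)); auto. apply in_map. apply Hl; lia.
           apply Qeq_sym; auto.
        -- apply V2; auto; lia.
    + intros a Ha. destruct (Nat.eq_dec (enc a) n); [lia|auto].
Qed.

Lemma linext {T} (enc : T -> nat) (Henc : forall a b, enc a = enc b -> a = b)
  (le : T -> T -> Prop) (le_trans : forall a b c, le a b -> le b c -> le a c)
  (le_anti : forall a b, le a b -> le b a -> a = b) (le_refl : forall a, le a a) :
  exists h : T -> Q, (forall a b, le a b -> h a <= h b) /\
                     (forall a b, h a == h b -> a = b).
Proof.
  assert (ST : forall n h, exists h', Valid enc le n h -> Valid enc le (S n) h' /\
     forall a, (enc a < n)%nat -> h' a = h a).
  { intros n h. destruct (classic (Valid enc le n h)) as [V|V].
    - destruct (step enc Henc le le_trans le_anti le_refl n h V) as [h' H']. exists h'; auto.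
    - exists h. intros; contradiction. }
  set (sf := fun n h => proj1_sig (constructive_indefinite_description _ (ST n h))).
  assert (Hsf : forall n h, Valid enc le n h -> Valid enc le (S n) (sf n h) /\
     forall a, (enc a < n)%nat -> sf n h a = h a).
  { intros n h. exact (proj2_sig (constructive_indefinite_description _ (ST n h))). }
  set (H := fix H n := match n with O => fun _ : T => 0 | S m => sf m (H m) end).
  assert (HV : forall n, Valid enc le n (H n)).
  { induction n as [|n IH].
    - split; intros; lia.
    - apply (Hsf n (H n) IH). }
  assert (HA : forall k n a, (enc a < n)%nat -> H (k + n)%nat a = H n a).
  { induction k as [|k IH]; intros n a Ha; [reflexivity|].
    simpl. rewrite (proj2 (Hsf _ _ (HV (k+n)%nat)) a) by lia. apply IH; auto. }
  assert (HA' : forall n m a, (enc a < n)%nat -> (n <= m)%nat -> H m a = H n a).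
  { intros n m a Ha Hm. replace m with ((m - n) + n)%nat by lia. apply HA; auto. }
  exists (fun a => H (S (enc a)) a). split.
  - intros a b Hab. set (m := S (Nat.max (enc a) (enc b))).
    rewrite <- (HA' (S (enc a)) m a), <- (HA' (S (enc b)) m b) by lia.
    apply (proj1 (HV m)); auto; lia.
  - intros a b Hab. set (m := S (Nat.max (enc a) (enc b))).
    rewrite <- (HA' (S (enc a)) m a), <- (HA' (S (enc b)) m b) in Hab by lia.
    apply (proj2 (HV m)); auto; lia.
Qed.

Local Open Scope R_scope.

Lemma sig_eq {A} {P : A -> Prop} (u v : sig P) : proj1_sig u = proj1_sig v -> u = v.
Proof. destruct u, v; simpl; intros ->; f_equal; apply proof_irrelevance. Qed.

Lemma rng_in {X Y} (Phi : X -> X -> Y) (y : rng Phi) :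
  exists x1 x2, y = in_rng Phi x1 x2.
Proof. destruct y as [v [x1 [x2 E]]]. exists x1, x2. apply sig_eq. simpl. auto. Qed.

Lemma in_rng_eq {X Y} (Phi : X -> X -> Y) a b c e :
  Phi a b = Phi c e -> in_rng Phi a b = in_rng Phi c e.
Proof. intros E; apply sig_eq; exact E. Qed.

Lemma build {X Y} (Phi : X -> X -> Y) (x0 : X) (h : rng Phi -> Q)
  (hinj : forall a b, (h a == h b)%Q -> a = b)
  (hmin : forall y, (h (in_rng Phi x0 x0) <= h y)%Q)
  (hsym : forall x y, in_rng Phi x y = in_rng Phi y x)
  (hzero : forall x, in_rng Phi x x = in_rng Phi x0 x0)
  (hult : forall x y z, (h (in_rng Phi x y) <= h (in_rng Phi x z))%Q \/
                        (h (in_rng Phi x y) <= h (in_rng Phi z y))%Q) :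
  exists d : X -> X -> R,
       pseudoultrametric d /\
       (forall x y, exists q : Q, (0 <= q)%Q /\ d x y = Q2R q) /\
       comb_similar Phi d.
Proof.
  set (c := h (in_rng Phi x0 x0)).
  set (d := fun x y => Q2R (h (in_rng Phi x y) - c)).
  exists d. split; [|split].
  - split; [|split; [|split]].
    + intros x y. unfold d. rewrite <- RMicromega.Q2R_0. apply Qle_Rle.
      specialize (hmin (in_rng Phi x y)). unfold c. lra.
    + intros x y. unfold d. rewrite hsym. auto.
    + intros z. unfold d. rewrite hzero. unfold c. rewrite <- RMicromega.Q2R_0.
      apply Qeq_eqR. lra.
    + intros x y z. apply Rmax_Rle. unfold d.
      destruct (hult x y z) as [H|H]; [left|right]; apply Qle_Rle; lra.
  - intros x y. exists (h (in_rng Phi x y) - c)%Q. split; [|reflexivity].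
    specialize (hmin (in_rng Phi x y)). unfold c. lra.
  - unshelve eexists (fun y => exist _ (Q2R (h y - c)) _).
    { destruct (rng_in Phi y) as [x1 [x2 ->]]. exists x1, x2. reflexivity. }
    exists (fun x => x). split; [split|split; [split|]].
    + intros a b E. apply (f_equal (@proj1_sig _ _)) in E. simpl in E.
      apply eqR_Qeq in E. apply hinj. lra.
    + intros [v [x1 [x2 E]]]. exists (in_rng Phi x1 x2). apply sig_eq. simpl.
      rewrite <- E. reflexivity.
    + intros a b E; exact E.
    + intros b; exists b; reflexivity.
    + intros x y. reflexivity.
Qed.

Lemma from_sim {X Y Z} (Phi : X -> X -> Y) (d : Z -> Z -> R) :
  pseudoultrametric d -> comb_similar Phi d ->
  exists val : rng Phi -> R, (forall a b, val a = val b -> a = b) /\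
    pseudoultrametric (fun x y => val (in_rng Phi x y)).
Proof.
  intros [P1 [P2 [P3 P4]]] [f [g [[finj fsurj] [[ginj gsurj] Heq]]]].
  exists (fun y => proj1_sig (f y)). split.
  - intros a b E. apply finj. apply sig_eq. exact E.
  - assert (K : forall z1 z2, proj1_sig (f (in_rng Phi (g z1) (g z2))) = d z1 z2).
    { intros; rewrite Heq; auto. }
    split; [|split; [|split]].
    + intros x y. destruct (gsurj x) as [z1 <-]. destruct (gsurj y) as [z2 <-].
      rewrite K; auto.
    + intros x y. destruct (gsurj x) as [z1 <-]. destruct (gsurj y) as [z2 <-].
      rewrite !K; auto.
    + intros x. destruct (gsurj x) as [z1 <-]. rewrite K; auto.
    + intros x y w. destruct (gsurj x) as [z1 <-]. destruct (gsurj y) as [z2 <-].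
      destruct (gsurj w) as [z3 <-]. rewrite !K; auto.
Qed.

Lemma ii_to_i {X Y Z} (Phi : X -> X -> Y) (x0 : X) (hc : countable_range Phi)
  (d : Z -> Z -> R) : pseudoultrametric d -> comb_similar Phi d ->
  exists d : X -> X -> R,
       pseudoultrametric d /\
       (forall x y, exists q : Q, (0 <= q)%Q /\ d x y = Q2R q) /\
       comb_similar Phi d.
Proof.
  intros Hd Hs. destruct (from_sim Phi d Hd Hs) as [val [vinj [P1 [P2 [P3 P4]]]]].
  destruct hc as [enc Henc].
  destruct (linext enc Henc (fun a b => val a <= val b)) as [h [hm hi]].
  - intros; Lra.lra.
  - intros; apply vinj; Lra.lra.
  - intros; Lra.lra.
  - apply (build Phi x0 h hi).
    + intros y. apply hm. destruct (rng_in Phi y) as [x1 [x2 ->]].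
      rewrite P3. auto.
    + intros x y. apply vinj. auto.
    + intros x. apply vinj. rewrite !P3. auto.
    + intros x y z. specialize (P4 x y z). apply Rmax_Rle in P4.
      destruct P4; [left|right]; apply hm; auto.
Qed.

Lemma ii_to_iii {X Y Z} (Phi : X -> X -> Y) (x0 : X)
  (d : Z -> Z -> R) : pseudoultrametric d -> comb_similar Phi d ->
   (symmetric_map Phi /\
    antisymmetric_rel (clos_trans Y (u_rel Phi)) /\
    (exists a0 : Y, (exists x y, Phi x y = a0) /\ coherent Phi a0) /\
    triple_condition Phi).
Proof.
  intros Hd Hs. destruct (from_sim Phi d Hd Hs) as [val [vinj [P1 [P2 [P3 P4]]]]].
  set (D := fun x y => val (in_rng Phi x y)).
  assert (Q1 : forall x y, 0 <= D x y) by exact P1.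
  assert (Q2 : forall x y, D x y = D y x) by exact P2.
  assert (Q3 : forall x, D x x = 0) by exact P3.
  assert (Q4 : forall x y z, D x y <= Rmax (D x z) (D z y)) by exact P4.
  clear P1 P2 P3 P4. rename Q1 into P1, Q2 into P2, Q3 into P3, Q4 into P4.
  assert (DE : forall a b c e, D a b = D c e -> Phi a b = Phi c e).
  { intros a b c e E. apply vinj in E. apply (f_equal (@proj1_sig _ _)) in E. exact E. }
  assert (ED : forall a b c e, Phi a b = Phi c e -> D a b = D c e).
  { intros a b c e E. unfold D. rewrite (in_rng_eq Phi a b c e E). auto. }
  assert (U4 : forall x y z, D x y <= D x z \/ D x y <= D z y).
  { intros x y z. apply Rmax_Rle. apply P4. }
  split; [|split; [|split]].
  - intros x y. apply DE. apply P2.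
  - assert (CT : forall a b, clos_trans Y (u_rel Phi) a b ->
       exists x1 x2 x3 x4, a = Phi x1 x2 /\ b = Phi x3 x4 /\ D x1 x2 <= D x3 x4).
    { intros a b H. induction H as [a b [x1 [x2 [x3 [E1 [E2 E3]]]]]|a b c _ [x1 [x2 [x3 [x4 [A1 [A2 A3]]]]]] _ [y1 [y2 [y3 [y4 [B1 [B2 B3]]]]]]].
      - exists x1, x3, x1, x2. split; [auto|split; [auto|]].
        assert (D x1 x2 = D x2 x3) by (apply ED; congruence).
        destruct (U4 x1 x3 x2); Lra.lra.
      - exists x1, x2, y3, y4. split; [auto|split; [auto|]].
        assert (D x3 x4 = D y1 y2) by (apply ED; congruence). Lra.lra. }
    intros a b Hab Hba.
    destruct (CT a b Hab) as [x1 [x2 [x3 [x4 [A1 [A2 A3]]]]]].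
    destruct (CT b a Hba) as [y1 [y2 [y3 [y4 [B1 [B2 B3]]]]]].
    assert (D x1 x2 = D y3 y4) by (apply ED; congruence).
    assert (D x3 x4 = D y1 y2) by (apply ED; congruence).
    rewrite A1, A2. apply DE. Lra.lra.
  - assert (Z0 : forall x y, Phi x y = Phi x0 x0 <-> D x y = 0).
    { intros x y. split; intros E.
      - rewrite (ED _ _ _ _ E). apply P3.
      - apply DE. rewrite P3. auto. }
    exists (Phi x0 x0). split; [eauto|]. split.
    + split.
      * intros x. apply Z0. apply P3.
      * intros x y z E1 E2. apply Z0. apply Z0 in E1. apply Z0 in E2.
        pose proof (P1 x z). destruct (U4 x z y); Lra.lra.
      * intros x y E. apply Z0. apply Z0 in E. rewrite P2. auto.
    + intros a b c e E1 E2. apply Z0 in E1. apply Z0 in E2. apply DE.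
      pose proof (P1 a c). pose proof (P1 b e). pose proof (P1 b c). pose proof (P1 a e).
      pose proof (P2 b a). pose proof (P2 e c).
      destruct (U4 a c b); destruct (U4 b c e); destruct (U4 b e a); destruct (U4 a e c); Lra.lra.
  - intros x1 x2 x3.
    pose proof (U4 x1 x2 x3). pose proof (U4 x2 x3 x1). pose proof (U4 x1 x3 x2).
    pose proof (P2 x3 x2). pose proof (P2 x2 x1). pose proof (P2 x3 x1).
    assert (D x1 x2 = D x2 x3 \/ D x1 x3 = D x2 x3 \/ D x1 x2 = D x1 x3) as [E|[E|E]].
    { destruct (Req_dec (D x1 x2) (D x2 x3)) as [?|n]; [left; auto|].
      destruct (Req_dec (D x1 x3) (D x2 x3)) as [?|n0]; [right; left; auto|].
      destruct (Req_dec (D x1 x2) (D x1 x3)) as [?|n1]; [right; right; auto|].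
      exfalso.
      destruct (Rdichotomy _ _ n); destruct (Rdichotomy _ _ n0); destruct (Rdichotomy _ _ n1);
      intuition Lra.lra. }
    + left. apply DE. auto.
    + right; left. apply DE. rewrite (P2 x3 x2). auto.
    + right; right; left. apply DE. rewrite (P2 x2 x1). auto.
Qed.

Lemma iii_to_i {X Y} (Phi : X -> X -> Y) (x0 : X) (hc : countable_range Phi) :
   (symmetric_map Phi /\
    antisymmetric_rel (clos_trans Y (u_rel Phi)) /\
    (exists a0 : Y, (exists x y, Phi x y = a0) /\ coherent Phi a0) /\
    triple_condition Phi) ->
  exists d : X -> X -> R,
       pseudoultrametric d /\
       (forall x y, exists q : Q, (0 <= q)%Q /\ d x y = Q2R q) /\
       comb_similar Phi d.
Proof.
  intros [Hsym [Hanti [[a0 [_ [[Erefl _ _] _]]] Htri]]].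
  destruct hc as [enc Henc].
  set (u' := fun a b : rng Phi => u_rel Phi (proj1_sig a) (proj1_sig b)).
  assert (RT : forall a b, clos_refl_trans _ u' a b ->
             a = b \/ clos_trans Y (u_rel Phi) (proj1_sig a) (proj1_sig b)).
  { intros a b H. induction H as [a b H|a|a b c _ [->|H1] _ [->|H2]]; auto.
    - right. apply t_step. exact H.
    - right. eapply t_trans; eauto. }
  destruct (linext enc Henc (clos_refl_trans _ u')) as [h [hm hi]].
  - intros a b c; apply rt_trans.
  - intros a b H1 H2. destruct (RT a b H1) as [|C1]; auto.
    destruct (RT b a H2) as [E|C2]; auto. apply sig_eq. apply Hanti; auto.
  - intros; apply rt_refl.
  - assert (Z0 : forall x, Phi x x = a0) by exact Erefl.
    apply (build Phi x0 h hi).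
    + intros y. apply hm. destruct (rng_in Phi y) as [x1 [x2 ->]].
      apply rt_step. unfold u'; simpl. exists x1, x2, x1.
      rewrite Z0, Z0. split; auto.
    + intros x y. apply in_rng_eq. apply Hsym.
    + intros x. apply in_rng_eq. rewrite !Z0. auto.
    + intros x y z.
      assert (Phi x y = Phi x z \/ Phi x y = Phi z y \/ u_rel Phi (Phi x y) (Phi x z)) as [E|[E|E]].
      { destruct (Htri x y z) as [E|[E|[E|[E|[E|E]]]]].
        - right; left. rewrite E. apply Hsym.
        - right; right. exists x, z, y. auto.
        - left. rewrite Hsym. auto.
        - right; right. exists x, z, y. split; auto. split; auto. rewrite Hsym, <- E. apply Hsym.
        - left. rewrite <- E. apply Hsym.
        - right; left. rewrite Hsym. auto. }
      * left. rewrite (in_rng_eq Phi _ _ _ _ E). apply Qle_refl.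
      * right. rewrite (in_rng_eq Phi _ _ _ _ E). apply Qle_refl.
      * left. apply hm. apply rt_step. exact E.
Qed.

Theorem theorem3p10 (X Y : Type) (Phi : X -> X -> Y)
  (hX : inhabited X) (hc : countable_range Phi) :
  ((exists d : X -> X -> R,
       pseudoultrametric d /\
       (forall x y, exists q : Q, (0 <= q)%Q /\ d x y = Q2R q) /\
       comb_similar Phi d)
   <->
   (exists (Z : Type) (d : Z -> Z -> R),
       pseudoultrametric d /\ comb_similar Phi d))
  /\
  ((exists (Z : Type) (d : Z -> Z -> R),
       pseudoultrametric d /\ comb_similar Phi d)
   <->
   (symmetric_map Phi /\
    antisymmetric_rel (clos_trans Y (u_rel Phi)) /\
    (exists a0 : Y, (exists x y, Phi x y = a0) /\ coherent Phi a0) /\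
    triple_condition Phi)).
Proof.
  destruct hX as [x0].
  split; split.
  - intros [d [Hd [_ Hs]]]. exists X, d. auto.
  - intros [Z [d [Hd Hs]]]. exact (ii_to_i Phi x0 hc d Hd Hs).
  - intros [Z [d [Hd Hs]]]. exact (ii_to_iii Phi x0 d Hd Hs).
  - intros H. destruct (iii_to_i Phi x0 hc H) as [d [Hd [_ Hs]]]. exists X, d. auto.
Qed.
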